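(* Assume (H1), (H2)(i) and (H2)(ii) described in the context, and set $l:=h+k$. Then for every $\sigma>0$ there is a constant $C_\sigma>0$ such that $$|H(x,s,t)|\le l(x)\big[\sigma(\Phi(s)+\Psi(t))+C_\sigma\big]\quad\text{for all }(x,s,t)\in\mathbb{R}^N\times(0,+\infty)^2.$$
   Context: Notation: $N\ge2$, $\mathbb{R}_+=(0,+\infty)$. A Young function is a convex $\Lambda:[0,\infty)\to[0,\infty)$ with $\Lambda(t)=0$ iff $t=0$, $\lim_{t\to0^+}\Lambda(t)/t=0$, $\lim_{t\to\infty}\Lambda(t)/t=\infty$; $\overline{\Lambda}(t)=\max_{s\ge0}\{st-\Lambda(s)\}$; for differentiable $\Lambda$, $s_\Lambda=\sup_{t>0}t\Lambda'(t)/\Lambda(t)$. $\Lambda_1\ll\Lambda_2$ means $\lim_{t\to\infty}\Lambda_1(t)/\Lambda_2(\eta t)=0$ for every $\eta>0$. Setting: $\Phi,\Psi$ Young functions, $\phi=\Phi'$, $\psi=\Psi'$; $f,g:\mathbb{R}_+\times\mathbb{R}_+\to\mathbb{R}_+$ continuous; $h,k:\mathbb{R}^N\to\mathbb{R}_+$ measurable. (H1) $\Phi,\Psi$ are $C^2$, $0<\inf_{t>0}\frac{t\phi'(t)}{\phi(t)}\le\sup_{t>0}\frac{t\phi'(t)}{\phi(t)}<\infty$, the same for $\psi$, and $\max\{s_\Phi,s_\Psi\}<N$. (H2)(i) $H:\mathbb{R}^N\times\mathbb{R}_+\times\mathbb{R}_+\to\mathbb{R}$ is measurable in $x$, $C^1$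 in $(s,t)$, with $\partial_sH(x,s,t)=h(x)f(s,t)$, $\partial_tH(x,s,t)=k(x)g(s,t)$, $H(\cdot,0,0)\equiv0$. (H2)(ii) There are differentiable Young functions $\Upsilon_1,\Upsilon_2,\Gamma_1,\Gamma_2$ with $\Upsilon_1\ll\Phi$, $\Gamma_2\ll\Psi$, constants $C>0$, $\alpha,\beta\in(0,1)$ such that for all $s,t>0$: $f(s,t)\le C[(s^{-\alpha}+1)(\Upsilon_2(t)/t+1)+\Upsilon_1(s)/s]$, $g(s,t)\le C[(t^{-\beta}+1)(\Gamma_1(s)/s+1)+\Gamma_2(t)/t]$; and $\overline{\Phi}\ll\Psi\circ\Upsilon_2^{-1}\circ\overline{\Upsilon}_2$, $\overline{\Psi}\ll\Phi\circ\Gamma_1^{-1}\circ\overline{\Gamma}_1$. *)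

(* Defs.v *)
From HB Require Import structures.
From mathcomp Require Import all_boot all_order all_algebra.
From mathcomp Require Import all_classical all_reals all_analysis.
Set Implicit Arguments. Unset Strict Implicit. Unset Printing Implicit Defensive.
Import Order.TTheory GRing.Theory Num.Theory.
Import numFieldNormedType.Exports.
Local Open Scope classical_set_scope.
Local Open Scope ring_scope.

Section Defs.
Variable R : realType.

(* Young function, given as a function R -> R whose behaviour on [0,oo) matters. *)
Definition young (L : R -> R) : Prop :=
  [/\ (forall x y l, 0 <= x -> 0 <= y -> 0 <= l <= 1 ->
         L (l * x + (1 - l) * y) <= l * L x + (1 - l) * L y),
      (forall t, 0 <= t -> 0 <= L t),
      (forall t, 0 <= t -> (L t = 0 <-> t = 0)),
      (fun t => L t / t) @ 0^'+ --> 0 &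
      (fun t => L t / t) @ +oo --> +oo ].

Definition young_conj (L : R -> R) (t : R) : R :=
  sup [set y | exists2 s, 0 <= s & y = s * t - L s].

(* inverse of a Young function on [0,oo) (generalized inverse; coincides with
   the inverse since a Young function is an increasing bijection of [0,oo)) *)
Definition young_inv (L : R -> R) (y : R) : R :=
  sup [set t | 0 <= t /\ L t <= y].

Definition sindex (L : R -> R) : \bar R :=
  ereal_sup [set ((t * derive1 L t / L t)%:E) | t in [set t | 0 < t]].

Definition lless (L1 L2 : R -> R) : Prop :=
  forall eta : R, 0 < eta -> (fun t => L1 t / L2 (eta * t)) @ +oo --> (0 : R).

Definition C2_pos (F : R -> R) : Prop :=
  [/\ (forall t, 0 < t -> derivable F t 1),
      (forall t, 0 < t -> derivable (derive1 F) t 1) &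
      (forall t, 0 < t -> {for t, continuous (derive1 (derive1 F))})].

(* 0 < inf_{t>0} t F''(t)/F'(t) <= sup_{t>0} t F''(t)/F'(t) < oo *)
Definition index_bounds (F : R -> R) : Prop :=
  exists a b : R, 0 < a /\
    forall t, 0 < t ->
      a <= t * derive1 (derive1 F) t / derive1 F t <= b.

Definition RN_measurable (N : nat) (u : 'rV[R]_N -> R) : Prop :=
  forall A : set R, measurable A ->
    (<<s [set U : set 'rV[R]_N | open U] >>) (u @^-1` A).

End Defs.

(* Main.v *)
Require Import Defs.
From HB Require Import structures.
From mathcomp Require Import all_boot all_order all_algebra.
From mathcomp Require Import all_classical all_reals all_analysis.
From mathcomp Require Import ring lra.
Import Order.TTheory GRing.Theory Num.Theory.
Import numFieldNormedType.Exports.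
Local Open Scope classical_set_scope.
Local Open Scope ring_scope.

Set Implicit Arguments. Unset Strict Implicit. Unset Printing Implicit Defensive.
Section Y.
Variable R : realType.
Implicit Types L : R -> R.

Lemma y0 L : young L -> L 0 = 0.
Proof. by case=> _ _ z _ _; apply/(z 0 (lexx _)). Qed.

Lemma yge0 L t : young L -> 0 <= t -> 0 <= L t.
Proof. by case=> _ p _ _ _; apply: p. Qed.

Lemma ypos L t : young L -> 0 < t -> 0 < L t.
Proof.
move=> Y t0; rewrite lt_def yge0 ?ltW// andbT; apply/eqP => Lt.
case: Y => _ _ z _ _; have := proj1 (z t (ltW t0)) Lt => t00.
by rewrite t00 ltxx in t0.
Qed.

Lemma ylin L r s : young L -> 0 <= r <= s -> 0 < s -> L r <= r / s * L s.
Proof.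
move=> Y /andP[r0 rs] s0; case: (Y) => cv _ _ _ _.
have l01 : 0 <= r / s <= 1.
  by apply/andP; split; [rewrite divr_ge0 // ltW | rewrite ler_pdivrMr// mul1r].
have := cv s 0 (r / s) (ltW s0) (lexx _) l01.
by rewrite mulr0 addr0 divfK ?gt_eqF// y0// mulr0 addr0.
Qed.

Lemma ymono L r s : young L -> 0 <= r <= s -> L r <= L s.
Proof.
move=> Y /andP[r0 rs]; have [s0|] := ltP 0 s.
  apply: (le_trans (ylin Y _ s0)); first by rewrite r0.
  rewrite ler_piMl //; first exact: yge0 (ltW s0).
  by rewrite ler_pdivrMr // mul1r.
move=> s0; have -> : r = s by apply/le_anti; rewrite rs (le_trans s0 r0).
by [].
Qed.

Lemma yratio L r s : young L -> 0 < r <= s -> L r / r <= L s / s.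
Proof.
move=> Y /andP[r0 rs]; have s0 := lt_le_trans r0 rs.
have H := ylin Y (_ : 0 <= r <= s) s0.
rewrite ler_pdivrMr//; apply: le_trans (H _) _; first by rewrite ltW.
by rewrite le_eqVlt; apply/orP; left; apply/eqP; ring.
Qed.

Lemma ystrict L r s : young L -> 0 <= r < s -> L r < L s.
Proof.
move=> Y /andP[r0 rs]; have s0 := le_lt_trans r0 rs.
have H := ylin Y (_ : 0 <= r <= s) s0.
apply: le_lt_trans (H _) _; first by rewrite r0 ltW.
by rewrite gtr_pMl; [rewrite ltr_pdivrMr// mul1r | exact: ypos].
Qed.

Lemma ysuper L M : young L -> exists T, 0 < T /\ forall r, T <= r -> M * r <= L r.
Proof.
case=> _ _ _ _ /cvgryPge /(_ M) [T [Tr HT]].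
exists (Num.max T 0 + 1); split; first by rewrite ltr_wpDl ?le_max ?lexx ?orbT.
move=> r Tr'; have r0 : 0 < r.
  by apply: lt_le_trans Tr'; rewrite ltr_wpDl ?le_max ?lexx ?orbT.
have := HT r; rewrite /= -(ler_pdivlMr _ _ r0); apply.
apply: lt_le_trans Tr'; rewrite ltr_pwDr// le_max lexx//.
Qed.

Lemma ysmall L e : young L -> 0 < e -> exists d, 0 < d /\ forall r, 0 < r < d -> L r <= e * r.
Proof.
case=> _ _ _ /cvgrPdist_le H _ e0; have := H e e0.
case=> d /= d0 Hd; exists d; split => // r /andP[r0 rd].
have := Hd r; rewrite /ball_ /= sub0r !normrN (ger0_norm (ltW r0)).
move=> /(_ rd r0); rewrite -(ler_pdivrMr _ _ r0).
by rewrite sub0r normrN => H2; exact: le_trans (ler_norm _) H2.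
Qed.


Lemma conj_ub L u : young L -> 0 <= u ->
  ubound [set y | exists2 r, 0 <= r & y = r * u - L r] (young_conj L u).
Proof.
move=> Y u0; apply: ub_le_sup.
have [T [T0 HT]] := ysuper u Y.
exists (T * u) => _ [r r0 ->].
have [rT|Tr] := leP r T.
  have := yge0 Y r0; have : r * u <= T * u by rewrite ler_wpM2r.
  lra.
have := HT r (ltW Tr); have : 0 <= T * u by rewrite mulr_ge0 // ltW.
rewrite [u * r]mulrC; lra.
Qed.

Lemma young_ineq L r u : young L -> 0 <= r -> 0 <= u ->
  r * u <= L r + young_conj L u.
Proof.
move=> Y r0 u0; have := conj_ub Y u0 (ex_intro2 _ _ r r0 erefl); lra.
Qed.

Lemma conj_ge0 L u : young L -> 0 <= u -> 0 <= young_conj L u.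
Proof.
move=> Y u0; have := young_ineq Y (lexx 0) u0; rewrite y0 // mul0r; lra.
Qed.

Lemma conj_mono L u v : young L -> 0 <= u -> u <= v ->
  young_conj L u <= young_conj L v.
Proof.
move=> Y u0 uv; apply: ge_sup; first by exists (0 * u - L 0), 0.
move=> _ [r r0 ->]; have := young_ineq Y r0 (le_trans u0 uv).
have : r * u <= r * v by rewrite ler_wpM2l.
lra.
Qed.

Lemma conj_ratio L s : young L -> 0 < s -> young_conj L (L s / s) <= L s.
Proof.
move=> Y s0; apply: ge_sup; first by exists (0 * (L s / s) - L 0), 0.
move=> _ [r r0 ->]; have a0 : 0 <= L s / s by rewrite divr_ge0 ?yge0 ?ltW.
have [rs|sr] := leP r s.
  have := yge0 Y r0; have : r * (L s / s) <= s * (L s / s) by rewrite ler_wpM2r.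
  rewrite [s * _]mulrC divfK ?gt_eqF //; lra.
have r0' : 0 < r by apply: lt_trans sr.
have := yratio Y (_ : 0 < s <= r); rewrite s0 ltW // => /(_ isT).
rewrite (ler_pdivlMr _ _ r0') [_ * r]mulrC => H; have := ypos Y s0; lra.
Qed.

Lemma conj_pos L v : young L -> 0 < v -> 0 < young_conj L v.
Proof.
move=> Y v0; have hv : 0 < v / 2 by rewrite divr_gt0.
have [d [d0 Hd]] := ysmall Y hv.
have H := Hd (d / 2).
have dd : 0 < d / 2 < d by rewrite divr_gt0 //= ltr_pdivrMr // ltr_pMr // ltr1n.
have {}H := H dd.
have := conj_ub Y (ltW v0) (ex_intro2 _ _ (d / 2) (_ : 0 <= d / 2) erefl).
move=> /(_ (ltW (proj1 (andP dd)))).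
have : 0 < d / 2 * (v / 2) by rewrite mulr_gt0 // divr_gt0.
have -> : d / 2 * v = 2 * (d / 2 * (v / 2)) by field.
rewrite [v / 2 * _]mulrC in H.
lra.
Qed.

Lemma inv_ub L y s : young L -> 0 < s -> y <= L s ->
  ubound [set t | 0 <= t /\ L t <= y] s.
Proof.
move=> Y s0 ys t [t0 Lt]; rewrite leNgt; apply/negP => st.
have := ystrict Y (_ : 0 <= s < t); rewrite (ltW s0) st => /(_ isT); lra.
Qed.

Lemma inv_le L y s : young L -> 0 <= y -> 0 < s -> y <= L s -> young_inv L y <= s.
Proof.
move=> Y y0' s0 ys; apply: ge_sup; last exact: inv_ub.
by exists 0; split => //; rewrite y0.
Qed.

Lemma inv_ge0 L y s : young L -> 0 <= y -> 0 < s -> y <= L s -> 0 <= young_inv L y.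
Proof.
move=> Y y0' s0 ys; apply: (ub_le_sup (ex_intro _ s (inv_ub Y s0 ys))).
by split => //; rewrite y0.
Qed.

Lemma inv_pos L y : young L -> 0 < y -> 0 < young_inv L y.
Proof.
move=> Y yp; have [T [T0 HT]] := ysuper 1 Y.
have s0 : 0 < T + y by rewrite addr_gt0.
have ys : y <= L (T + y).
  have := HT (T + y); rewrite mul1r => /(_ _); rewrite lerDl ltW // => /(_ isT).
  lra.
have [d [d0 Hd]] := ysmall Y (ltr01 : 0 < 1 :> R).
pose t := Num.min (d / 2) (y / 2).
have t0 : 0 < t by rewrite lt_min !divr_gt0.
have td : t < d by rewrite gt_min ltr_pdivrMr // ltr_pMr // ltr1n.
have ty : t <= y / 2 by rewrite ge_min lexx orbT.
have Lt := Hd t; rewrite t0 td mul1r in Lt; have {}Lt := Lt isT.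
have t0c := t0; apply: lt_le_trans t0 _.
apply: (ub_le_sup (ex_intro _ _ (inv_ub Y s0 ys))); split; first exact: (ltW t0c).
have : y / 2 <= y by rewrite ler_pdivrMr // ler_pMr // ler1n.
lra.
Qed.

Lemma lin_bound L d : young L -> 0 < d -> exists K, forall s, 0 <= s -> s <= d * L s + K.
Proof.
move=> Y d0; have [T [T0 HT]] := ysuper (d^-1) Y.
exists T => s s0; have [sT|Ts] := leP s T.
  have : 0 <= d * L s by rewrite mulr_ge0 ?yge0 // ltW.
  lra.
have := HT s (ltW Ts); rewrite -(ler_pM2l d0) mulrA mulfV ?gt_eqF // mul1r.
have := ltW T0; lra.
Qed.

Lemma lless_bound L1 L2 d : young L1 -> young L2 -> lless L1 L2 -> 0 < d ->
  exists K, forall s, 0 <= s -> L1 s <= d * L2 s + K.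
Proof.
move=> Y1 Y2 ll d0; have := ll 1 ltr01.
move=> /cvgrPdist_le /(_ d d0) [M [Mr HM]].
pose T := Num.max M 0 + 1.
have hm1 : 0 <= Num.max M 0 by rewrite le_max lexx orbT.
have hm2 : M <= Num.max M 0 by rewrite le_max lexx.
have T0 : 0 < T by rewrite /T; lra.
have MT : M < T by rewrite /T; lra.
exists (L1 T) => s s0; have [sT|Ts] := leP s T.
  have := ymono Y1 (_ : 0 <= s <= T); rewrite s0 sT => /(_ isT).
  have : 0 <= d * L2 s by rewrite mulr_ge0 ?yge0 // ltW.
  lra.
have s0' : 0 < s by apply: lt_trans Ts.
have := HM s (lt_trans MT Ts); rewrite /= mul1r sub0r normrN.
have L2s := ypos Y2 s0'.
rewrite ger0_norm; last by rewrite divr_ge0 // yge0 // ltW.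
rewrite ler_pdivrMr // => H.
have := yge0 Y1 (ltW T0); rewrite [d * L2 s]mulrC; lra.
Qed.

Lemma cross_bound (Phi Psi Gam1 : R -> R) d : young Phi -> young Psi -> young Gam1 ->
  lless (young_conj Psi) (Phi \o young_inv Gam1 \o young_conj Gam1) -> 0 < d ->
  exists K, forall s t, 0 < s -> 0 <= t -> t * (Gam1 s / s) <= d * (Phi s + Psi t) + K.
Proof.
move=> YP YS YG ll d0; have := ll d d0.
move=> /cvgrPdist_le /(_ 1 ltr01) [M [Mr HM]].
pose T := Num.max M 0 + 1.
have hm1 : 0 <= Num.max M 0 by rewrite le_max lexx orbT.
have hm2 : M <= Num.max M 0 by rewrite le_max lexx.
have T0 : 0 < T by rewrite /T; lra.
have MT : M < T by rewrite /T; lra.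
exists (d * young_conj Psi T) => s t s0 t0.
pose a := Gam1 s / s; pose u := a / d.
have ap : 0 < a by rewrite divr_gt0 // ypos.
have u0 : 0 <= u by rewrite divr_ge0 // ltW.
have cT := conj_ge0 YS (ltW T0).
have Hu : young_conj Psi u <= Phi s + young_conj Psi T.
  have Phs := yge0 YP (ltW s0).
  have [uT|Tu] := leP u T.
    have := conj_mono YS u0 uT; lra.
  have u0' : 0 < u by apply: lt_trans Tu.
  have := HM u (lt_trans MT Tu); rewrite /= sub0r normrN.
  have -> : d * u = a by rewrite /u mulrC divfK ?gt_eqF.
  have ca := conj_pos YG ap.
  have ia := inv_pos YG ca.
  have Pa := ypos YP ia.
  rewrite ger0_norm; last by rewrite divr_ge0 // ?conj_ge0 // ?ltW // yge0 // ltW.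
rewrite ler_pdivrMr // mul1r => H.
  have ca' := conj_ratio YG s0.
  have := ymono YP (_ : 0 <= young_inv Gam1 (young_conj Gam1 a) <= s).
  rewrite (inv_le YG (ltW ca) s0 ca') (ltW ia) => /(_ isT).
  lra.
have := young_ineq YS t0 u0.
have -> : t * a = d * (t * u) by rewrite /u; field; rewrite gt_eqF.
move=> H; rewrite -/a.
have : d * (t * u) <= d * (Psi t + young_conj Psi u) by rewrite ler_pM2l.
have : d * (Psi t + young_conj Psi u) <= d * (Psi t + (Phi s + young_conj Psi T)).
  by rewrite ler_pM2l // lerD2l.
have -> : d * (Phi s + Psi t) + d * young_conj Psi T =
   d * (Psi t + (Phi s + young_conj Psi T)) by ring.
lra.
Qed.

Lemma cmp (F G dF dG : R -> R) (a b : R) : a < b ->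
  (forall r : R, a <= r <= b -> is_derive r (1:R) F (dF r)) ->
  (forall r : R, a <= r <= b -> is_derive r (1:R) G (dG r)) ->
  (forall r, a < r < b -> dF r <= dG r) -> F b - F a <= G b - G a.
Proof.
move=> ab dF1 dG1 le.
have D r : a <= r <= b -> is_derive r 1 (G - F) (dG r - dF r).
  move=> h; have := dG1 r h; have := dF1 r h => h1 h2; exact: is_deriveB.
have := @MVT R (G - F) (fun r => dG r - dF r) a b ab.
case.
- by move=> x; rewrite in_itv /= => /andP[h1 h2]; apply: D; rewrite !ltW.
- apply: derivable_within_continuous => x; rewrite in_itv /= => h.
  by have := D x h => /(@ex_derive _ _ _ _ _ _ _).
move=> c; rewrite in_itv /= => /andP[h1 h2]; rewrite /= => E.
have {}E : G b - F b - (G a - F a) = (dG c - dF c) * (b - a) by exact: E.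
have : 0 <= (dG c - dF c) * (b - a).
  by rewrite mulr_ge0 // subr_ge0 ?le ?h1 ?h2 // ltW.
rewrite -E; lra.
Qed.

Lemma derG (K1 K2 al r : R) : 0 < r -> al < 1 ->
  is_derive r (1:R) (fun r => K1 * (r `^ (1 - al) / (1 - al) + r) + K2 * r)
    (K1 * (r `^ (-al) + 1) + K2).
Proof.
move=> r0 al1.
have Hp := is_derive1_powR (1 - al) r0.
apply: is_derive_eq.
have -> : 1 - al - 1 = - al by ring.
have h : 1 - al != 0 by rewrite subr_eq0 eq_sym lt_eqF.
by rewrite scaler0 add0r /GRing.scale /= mulr1 mulrA mulVf // mul1r.
Qed.

Lemma segment (P dP : R -> R) (e s K1 K2 al : R) : 0 < e -> e < s -> 0 < al < 1 ->
  0 <= K1 -> 0 <= K2 ->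
  (forall r : R, 0 < r -> is_derive r (1:R) P (dP r)) ->
  (forall r : R, e < r < s -> 0 <= dP r <= K1 * (r `^ (-al) + 1) + K2) ->
  0 <= P s - P e <= K1 * (s `^ (1 - al) / (1 - al) + s) + K2 * s.
Proof.
move=> e0 es /andP[al0 al1] K10 K20 dP1 b.
have pos (r : R) : e <= r -> 0 < r by move=> h; apply: lt_le_trans h.
apply/andP; split.
  have := @cmp (fun=> 0) P (fun=> 0) dP e s es.
  rewrite subrr; apply.
  - by move=> r /andP[h _]; apply: dP1; apply: pos.
  - by move=> r h; have /andP[] := b r h.
have := @cmp P (fun r => K1 * (r `^ (1 - al) / (1 - al) + r) + K2 * r) dP
  (fun r => K1 * (r `^ (-al) + 1) + K2) e s es.
have Ge : 0 <= K1 * (e `^ (1 - al) / (1 - al) + e) + K2 * e.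
  have h1 : 0 <= e `^ (1 - al) / (1 - al) by rewrite divr_ge0 ?powR_ge0 // subr_ge0 ltW.
  have h2 : 0 <= K1 * (e `^ (1 - al) / (1 - al) + e) by rewrite mulr_ge0 // addr_ge0 // ltW.
  have h3 : 0 <= K2 * e by rewrite mulr_ge0 // ltW.
  lra.
move=> H; have {}H := H (fun r h => dP1 r (pos r (proj1 (andP h)))).
have {}H := H (fun r h => derG K1 K2 (pos r (proj1 (andP h))) al1).
have {}H := H (fun r h => proj2 (andP (b r h))).
lra.
Qed.

Lemma lim_step (Hx : R -> R -> R) (s t B : R) :
  {within [set p : R * R | 0 <= p.1 /\ 0 <= p.2], continuous (fun p => Hx p.1 p.2)} ->
  Hx 0 0 = 0 ->
  (exists2 d, 0 < d & forall e, 0 < e < d -> `|Hx s t - Hx e e| <= B) ->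
  `|Hx s t| <= B.
Proof.
move=> /subspace_continuousP cH H00 [d d0 Hd].
have := cH (0, 0) (conj (lexx 0) (lexx 0)).
move=> /cvgrPdist_le cv.
apply/ler_addgt0Pr => eta eta0.
have := cv eta eta0; rewrite /from_subspace /= H00 /within /= => /nbhs_ballP [r /= r0 Hr].
pose e := Num.min d r / 2.
have mp : 0 < Num.min d r by rewrite lt_min d0.
have e0 : 0 < e by rewrite divr_gt0.
have em : e < Num.min d r by rewrite /e ltr_pdivrMr // ltr_pMr // ltr1n.
have ed : e < d by apply: (lt_le_trans em); rewrite ge_min lexx.
have er : e < r by apply: (lt_le_trans em); rewrite ge_min lexx orbT.
have := Hr (e, e); rewrite /= sub0r normrN.
have eb : ball (0, 0) r (e, e).
  by split; rewrite /ball /= sub0r normrN ger0_norm // ltW.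
move=> /(_ eb (conj (ltW e0) (ltW e0))) He.
have := Hd e; rewrite e0 ed => /(_ isT) He2.
have := ler_normD (Hx s t - Hx e e) (Hx e e); rewrite subrK.
lra.
Qed.

Definition dom (Q V : R -> R -> R) := forall d, 0 < d -> exists K,
  forall s t, 0 < s -> 0 < t -> Q s t <= d * V s t + K.

Lemma domD Q1 Q2 V : dom Q1 V -> dom Q2 V -> dom (fun s t => Q1 s t + Q2 s t) V.
Proof.
move=> d1 d2 d d0; have d20 : 0 < d / 2 by rewrite divr_gt0.
have [K1 H1] := d1 _ d20; have [K2 H2] := d2 _ d20.
exists (K1 + K2) => s t s0 t0; have := H1 s t s0 t0; have := H2 s t s0 t0.
have -> : d * V s t = d / 2 * V s t + d / 2 * V s t by field.
lra.
Qed.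

Lemma domZ c Q V : 0 <= c -> (forall s t, 0 < s -> 0 < t -> 0 <= V s t) ->
  dom Q V -> dom (fun s t => c * Q s t) V.
Proof.
move=> c0 V0 dq d d0; have c1 : 0 < c + 1 by rewrite ltr_wpDl.
have [K H] := dq (d / (c + 1)) (divr_gt0 d0 c1).
exists (c * K) => s t s0 t0; have := H s t s0 t0 => h.
have : c * Q s t <= c * (d / (c + 1) * V s t + K) by rewrite ler_wpM2l.
have : c * (d / (c + 1) * V s t) <= d * V s t.
  rewrite mulrA ler_wpM2r ?V0 //.
  by rewrite mulrA ler_pdivrMr // mulrDr mulr1 mulrC lerDl ltW.
have -> : c * (d / (c + 1) * V s t + K) = c * (d / (c + 1) * V s t) + c * K by ring.
lra.
Qed.

Lemma domC c V : (forall s t, 0 < s -> 0 < t -> 0 <= V s t) -> dom (fun _ _ => c) V.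
Proof.
move=> V0 d d0; exists c => s t s0 t0.
have : 0 <= d * V s t by rewrite mulr_ge0 ?V0 // ltW.
lra.
Qed.

Lemma domle Q Q' V : (forall s t, 0 < s -> 0 < t -> Q s t <= Q' s t) -> dom Q' V -> dom Q V.
Proof.
move=> le dq d d0; have [K H] := dq d d0; exists K => s t s0 t0.
exact: le_trans (le s t s0 t0) (H s t s0 t0).
Qed.

Lemma powle (x w : R) : 0 < x -> 0 <= w <= 1 -> x `^ w <= 1 + x.
Proof.
move=> x0 /andP[w0 w1]; have [x1|x1] := leP x 1.
  have := @ge0_ler_powR R w w0 x 1; rewrite !nnegrE powR1 ltW // => /(_ isT ler01 x1).
  lra.
have := ler1_powR (ltW x1) w1; lra.
Qed.
End Y.

Unset Implicit Arguments.
Set Strict Implicit.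
Set Printing Implicit Defensive.

Theorem lemma4p1 (R : realType) (N : nat) (Phi Psi : R -> R)
  (f g : R -> R -> R) (h k : 'rV[R]_N -> R) (H : 'rV[R]_N -> R -> R -> R)
  (Ups1 Ups2 Gam1 Gam2 : R -> R) (C alpha beta : R) :
  (2 <= N)%N ->
  (* standing assumptions on Phi, Psi, f, g, h, k *)
  young Phi -> young Psi ->
  (forall s t, 0 < s -> 0 < t -> 0 < f s t /\ 0 < g s t) ->
  {within [set p : R * R | 0 < p.1 /\ 0 < p.2], continuous (fun p => f p.1 p.2)} ->
  {within [set p : R * R | 0 < p.1 /\ 0 < p.2], continuous (fun p => g p.1 p.2)} ->
  RN_measurable h -> RN_measurable k ->
  (forall x, 0 < h x) -> (forall x, 0 < k x) ->
  (* (H1) *)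
  C2_pos Phi -> C2_pos Psi -> index_bounds Phi -> index_bounds Psi ->
  (Order.max (sindex Phi) (sindex Psi) < (N%:R)%:E)%E ->
  (* (H2)(i) *)
  (forall s t, 0 < s -> 0 < t -> RN_measurable (fun x => H x s t)) ->
  (forall x, {within [set p : R * R | 0 <= p.1 /\ 0 <= p.2],
               continuous (fun p => H x p.1 p.2)}) ->
  (forall (x : 'rV[R]_N) (s t : R), 0 < s -> 0 < t ->
      is_derive s 1 (fun s' => H x s' t) (h x * f s t) /\
      is_derive t 1 (fun t' => H x s t') (k x * g s t)) ->
  (forall x, H x 0 0 = 0) ->
  (* (H2)(ii) *)
  young Ups1 -> young Ups2 -> young Gam1 -> young Gam2 ->
  (forall t, 0 < t -> derivable Ups1 t 1 /\ derivable Ups2 t 1 /\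
                       derivable Gam1 t 1 /\ derivable Gam2 t 1) ->
  lless Ups1 Phi -> lless Gam2 Psi ->
  0 < C -> 0 < alpha < 1 -> 0 < beta < 1 ->
  (forall s t, 0 < s -> 0 < t ->
     f s t <= C * ((s `^ (- alpha) + 1) * (Ups2 t / t + 1) + Ups1 s / s)) ->
  (forall s t, 0 < s -> 0 < t ->
     g s t <= C * ((t `^ (- beta) + 1) * (Gam1 s / s + 1) + Gam2 t / t)) ->
  lless (young_conj Phi) (Psi \o young_inv Ups2 \o young_conj Ups2) ->
  lless (young_conj Psi) (Phi \o young_inv Gam1 \o young_conj Gam1) ->
  (* conclusion, with l := h + k *)
  forall sigma : R, 0 < sigma ->
    exists Cs : R, 0 < Cs /\
      forall (x : 'rV[R]_N) (s t : R), 0 < s -> 0 < t ->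
        `|H x s t| <= (h x + k x) * (sigma * (Phi s + Psi t) + Cs).
Proof.
move=> N2 YPhi YPsi fgpos fc gc hm km hpos kpos C2P C2S ibP ibS sidx Hm Hc Hd H00.
move=> YU1 YU2 YG1 YG2 derivs llU llG C0 /andP[a0 a1] /andP[b0 b1] fb gb llP llS.
move=> sigma sig0.
pose V := fun s t => Phi s + Psi t.
have V0 : forall s t, 0 < s -> 0 < t -> 0 <= V s t.
  by move=> s t s0 t0; rewrite /V addr_ge0 // yge0 // ltW.
have w0 : 0 < 1 - alpha by rewrite subr_gt0.
have w'0 : 0 < 1 - beta by rewrite subr_gt0.
have ds : dom (fun s _ => s) V.
  move=> d d0; have [K HK] := lin_bound YPhi d0; exists K => s t s0 t0.
  have := HK s (ltW s0); have : 0 <= d * Psi t by rewrite mulr_ge0 ?yge0 // ltW.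
  rewrite /V mulrDr; lra.
have dt : dom (fun _ t => t) V.
  move=> d d0; have [K HK] := lin_bound YPsi d0; exists K => s t s0 t0.
  have := HK t (ltW t0); have : 0 <= d * Phi s by rewrite mulr_ge0 ?yge0 // ltW.
  rewrite /V mulrDr; lra.
have dU1 : dom (fun s _ => Ups1 s) V.
  move=> d d0; have [K HK] := lless_bound YU1 YPhi llU d0; exists K => s t s0 t0.
  have := HK s (ltW s0); have : 0 <= d * Psi t by rewrite mulr_ge0 ?yge0 // ltW.
  rewrite /V mulrDr; lra.
have dG2 : dom (fun _ t => Gam2 t) V.
  move=> d d0; have [K HK] := lless_bound YG2 YPsi llG d0; exists K => s t s0 t0.
  have := HK t (ltW t0); have : 0 <= d * Phi s by rewrite mulr_ge0 ?yge0 // ltW.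
  rewrite /V mulrDr; lra.
have dX : dom (fun s t => t * (Gam1 s / s)) V.
  move=> d d0; have [K HK] := cross_bound YPhi YPsi YG1 llS d0; exists K => s t s0 t0.
  exact: HK s t s0 (ltW t0).
have dA : dom (fun s _ => Gam1 s / s) V.
  move=> d d0; have [K HK] := cross_bound YPhi YPsi YG1 llS d0.
  exists (d * Psi 1 + K) => s t s0 t0.
  have := HK s 1 s0 ler01; rewrite mul1r.
  have : 0 <= d * Psi t by rewrite mulr_ge0 ?yge0 // ltW.
  rewrite /V !mulrDr; lra.
pose A0 s := 2 * C * (s `^ (1 - alpha) / (1 - alpha) + s) + C * Ups1 s.
pose B0 s t := C * (Gam1 s / s + 1) * (t `^ (1 - beta) / (1 - beta) + t) + C * Gam2 t.
have dA0 : dom (fun s _ => A0 s) V.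
  have c1 : 0 <= 2 * C / (1 - alpha) by rewrite divr_ge0 // ?mulr_ge0 // ltW.
  have c2 : 0 <= 2 * C by rewrite mulr_ge0 // ltW.
  have e := domD (domD (domD (domC (2 * C / (1 - alpha)) V0) (domZ c1 V0 ds))
             (domZ c2 V0 ds)) (domZ (ltW C0) V0 dU1).
  apply: domle e => s t s0 t0 /=; rewrite /A0.
  have p := powle s0 (_ : 0 <= 1 - alpha <= 1).
  have {p}p := p (ltac:(apply/andP; split; [exact: ltW | lra])).
  have : s `^ (1 - alpha) / (1 - alpha) <= (1 + s) / (1 - alpha).
    by rewrite ler_pM2r // invr_gt0.
  move=> h1.
  have : 2 * C * (s `^ (1 - alpha) / (1 - alpha) + s) <= 2 * C * ((1 + s) / (1 - alpha) + s).
    by rewrite ler_wpM2l // lerD2r.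
  have -> : 2 * C / (1 - alpha) + 2 * C / (1 - alpha) * s + 2 * C * s + C * Ups1 s =
    2 * C * ((1 + s) / (1 - alpha) + s) + C * Ups1 s by ring.
  lra.
have dB0 : dom B0 V.
  have c1 : 0 <= C / (1 - beta) by rewrite divr_ge0 // ltW.
  have c2 : 0 <= C / (1 - beta) + C by rewrite addr_ge0 // ltW.
  have e := domD (domD (domD (domD (domZ c1 V0 dA) (domC (C / (1 - beta)) V0))
             (domZ c2 V0 dX)) (domZ c2 V0 dt)) (domZ (ltW C0) V0 dG2).
  apply: domle e => s t s0 t0 /=; rewrite /B0.
  have p := powle t0 (_ : 0 <= 1 - beta <= 1).
  have {p}p := p (ltac:(apply/andP; split; [exact: ltW | lra])).
  have : t `^ (1 - beta) / (1 - beta) <= (1 + t) / (1 - beta).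
    by rewrite ler_pM2r // invr_gt0.
  move=> h1.
  have ca : 0 <= C * (Gam1 s / s + 1).
    have ga : 0 <= Gam1 s / s by rewrite divr_ge0 // ?(yge0 YG1) // ltW.
    by apply: mulr_ge0; [exact: ltW | rewrite addr_ge0].
  have : C * (Gam1 s / s + 1) * (t `^ (1 - beta) / (1 - beta) + t) <=
         C * (Gam1 s / s + 1) * ((1 + t) / (1 - beta) + t).
    by rewrite ler_wpM2l // lerD2r.
  have -> : C / (1 - beta) * (Gam1 s / s) + C / (1 - beta) +
     (C / (1 - beta) + C) * (t * (Gam1 s / s)) + (C / (1 - beta) + C) * t + C * Gam2 t =
     C * (Gam1 s / s + 1) * ((1 + t) / (1 - beta) + t) + C * Gam2 t by ring.
  lra.
have [KA HA] := dA0 sigma sig0.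
have [KB HB] := dB0 sigma sig0.
exists (`|KA| + `|KB| + 1); split.
  by rewrite ltr_wpDl // addr_ge0.
move=> x s t s0 t0.
have Hb : `|H x s t| <= h x * A0 s + k x * B0 s t.
  apply: (lim_step (Hx := H x)); [exact: Hc | exact: H00 |].
  have [d2 [d20 Hd2]] := ysmall YU2 (ltr01 : 0 < 1 :> R).
  exists (Num.min (Num.min s t) d2); first by rewrite !lt_min s0 t0 d20.
  move=> e /andP[e0]; rewrite !lt_min => /andP[/andP[es et] ed2].
  have u2 : Ups2 e / e <= 1.
    by rewrite ler_pdivrMr // mul1r -[X in _ <= X]mul1r; apply: Hd2; rewrite e0 ed2.
  have u20 : 0 <= Ups2 e / e by rewrite divr_ge0 // ?(yge0 YU2) // ltW.
  have hx0 := hpos x; have kx0 := kpos x.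
  have K10 : 0 <= 2 * h x * C by rewrite !mulr_ge0 // ltW.
  have K20 : 0 <= h x * C * (Ups1 s / s).
    have q : 0 <= Ups1 s / s by rewrite divr_ge0 // ?(yge0 YU1) // ltW.
    by rewrite mulr_ge0 // mulr_ge0 // ltW.
  have hor := @segment R (fun r => H x r e) (fun r => h x * f r e) e s
    (2 * h x * C) (h x * C * (Ups1 s / s)) alpha e0 es (ltac:(by rewrite a0 a1)) K10 K20.
  have {hor} := hor (fun r r0 => proj1 (Hd x r e r0 e0)).
  have bh : forall r : R, e < r < s -> 0 <= h x * f r e <=
       2 * h x * C * (r `^ (- alpha) + 1) + h x * C * (Ups1 s / s).
    move=> r /andP[er rs]; have r0 : 0 < r by apply: lt_trans er.
    have [fp _] := fgpos r e r0 e0.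
    apply/andP; split; first by rewrite mulr_ge0 // ltW.
    have pw := powR_ge0 r (- alpha).
    have u1 : Ups1 r / r <= Ups1 s / s by apply: yratio; rewrite // r0 ltW.
    have m1 : (r `^ (- alpha) + 1) * (Ups2 e / e + 1) <= (r `^ (- alpha) + 1) * 2.
      by apply: ler_wpM2l; [rewrite addr_ge0 | lra].
    have m2 : f r e <= C * ((r `^ (- alpha) + 1) * 2 + Ups1 s / s).
      apply: le_trans (fb r e r0 e0) _; apply: ler_wpM2l; [exact: ltW | lra].
    have m3 := ler_wpM2l (ltW hx0) m2.
    have -> : 2 * h x * C * (r `^ (- alpha) + 1) + h x * C * (Ups1 s / s) =
      h x * (C * ((r `^ (- alpha) + 1) * 2 + Ups1 s / s)) by ring.
    exact: m3.
  move=> /(_ bh) /andP[hor1 hor2].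
  have ga : 0 <= Gam1 s / s by rewrite divr_ge0 // ?(yge0 YG1) // ltW.
  have K10' : 0 <= k x * C * (Gam1 s / s + 1).
    by rewrite mulr_ge0 ?addr_ge0 // mulr_ge0 // ltW.
  have K20' : 0 <= k x * C * (Gam2 t / t).
    have q : 0 <= Gam2 t / t by rewrite divr_ge0 // ?(yge0 YG2) // ltW.
    by rewrite mulr_ge0 // mulr_ge0 // ltW.
  have ver := @segment R (fun r => H x s r) (fun r => k x * g s r) e t
    (k x * C * (Gam1 s / s + 1)) (k x * C * (Gam2 t / t)) beta e0 et
    (ltac:(by rewrite b0 b1)) K10' K20'.
  have {ver} := ver (fun r r0 => proj2 (Hd x s r s0 r0)).
  have bv : forall r : R, e < r < t -> 0 <= k x * g s r <=
       k x * C * (Gam1 s / s + 1) * (r `^ (- beta) + 1) + k x * C * (Gam2 t / t).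
    move=> r /andP[er rt]; have r0 : 0 < r by apply: lt_trans er.
    have [_ gp] := fgpos s r s0 r0.
    apply/andP; split; first by rewrite mulr_ge0 // ltW.
    have u1 : Gam2 r / r <= Gam2 t / t by apply: yratio; rewrite // r0 ltW.
    have m2 : g s r <= C * ((r `^ (- beta) + 1) * (Gam1 s / s + 1) + Gam2 t / t).
      apply: le_trans (gb s r s0 r0) _; apply: ler_wpM2l; [exact: ltW | lra].
    have m3 := ler_wpM2l (ltW kx0) m2.
    have -> : k x * C * (Gam1 s / s + 1) * (r `^ (- beta) + 1) + k x * C * (Gam2 t / t) =
      k x * (C * ((r `^ (- beta) + 1) * (Gam1 s / s + 1) + Gam2 t / t)) by ring.
    exact: m3.
  move=> /(_ bv) /andP[ver1 ver2].
  have E1 : 2 * h x * C * (s `^ (1 - alpha) / (1 - alpha) + s) + h x * C * (Ups1 s / s) * s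
     = h x * A0 s.
    by rewrite /A0; field; rewrite !gt_eqF.
  have E2 : k x * C * (Gam1 s / s + 1) * (t `^ (1 - beta) / (1 - beta) + t) +
     k x * C * (Gam2 t / t) * t = k x * B0 s t.
    by rewrite /B0; field; rewrite !gt_eqF.
  rewrite ger0_norm; last by lra.
  lra.
have := HA s t s0 t0; have := HB s t s0 t0 => HB' HA'.
have h0 := hpos x; have k0 := kpos x.
have HA2 : A0 s <= sigma * (Phi s + Psi t) + (`|KA| + `|KB| + 1).
  have := ler_norm KA; have := normr_ge0 KB; move: HA'; rewrite /V /=; lra.
have HB2 : B0 s t <= sigma * (Phi s + Psi t) + (`|KA| + `|KB| + 1).
  have := ler_norm KB; have := normr_ge0 KA; move: HB'; rewrite /V /=; lra.
have := ler_wpM2l (ltW h0) HA2; have := ler_wpM2l (ltW k0) HB2.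
rewrite mulrDl; lra.
Qed.
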